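(* Let $W\subseteq\mathbb{R}^d$ be open, bounded, convex, inner regular with $0\in W$, and $h>1$. Define $v_0=h\,\mathbf 1_{hW}$ on $\mathbb{Z}^d$ and $v_{k+1}=v_k+(2d)^{-1}\max\{0,\Delta v_k-\mathbf 1_{\{v_k=0\}}\}$. Then $v_k$ converges pointwise as $k\to\infty$ to $u_h$, the least function $u:\mathbb{Z}^d\to\mathbb{R}$ satisfying $u\ge h\mathbf 1_{hW}$ and $\Delta u\le\mathbf 1_{\{u=0\}}$.
   Context: Discrete Laplacian: $\Delta u(x)=\sum_{i=1}^d(u(x+e_i)+u(x-e_i)-2u(x))$. $W$ inner regular means for some $r>0$ every $x\in\partial W$ lies on $\partial B_r(y)$ with $B_r(y)\subseteq W$. *)

(* Defs.v *)
From mathcomp Require Import all_boot.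
From Stdlib Require Import Reals ClassicalEpsilon.
Set Implicit Arguments. Unset Strict Implicit.
Open Scope R_scope.

Definition Rvec (d : nat) := 'I_d -> R.
Definition Zvec (d : nat) := 'I_d -> Z.

Definition sumI (d : nat) (f : 'I_d -> R) : R :=
  List.fold_right (fun i acc => f i + acc) 0 (enum 'I_d).

Definition dist (d : nat) (x y : Rvec d) : R :=
  sqrt (sumI (fun i => (x i - y i) ^ 2)).

Definition ball (d : nat) (y : Rvec d) (r : R) : Rvec d -> Prop :=
  fun x => dist x y < r.

Definition subset (d : nat) (A B : Rvec d -> Prop) := forall x, A x -> B x.

Definition is_open (d : nat) (W : Rvec d -> Prop) :=
  forall x, W x -> exists r, 0 < r /\ subset (ball x r) W.

Definition is_bounded (d : nat) (W : Rvec d -> Prop) :=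
  exists M, forall x, W x -> dist x (fun _ => 0) <= M.

Definition is_convex (d : nat) (W : Rvec d -> Prop) :=
  forall x y t, W x -> W y -> 0 <= t <= 1 -> W (fun i => (1 - t) * x i + t * y i).

Definition closure (d : nat) (W : Rvec d -> Prop) : Rvec d -> Prop :=
  fun x => forall eps, 0 < eps -> exists w, W w /\ dist x w < eps.

Definition interior (d : nat) (W : Rvec d -> Prop) : Rvec d -> Prop :=
  fun x => exists r, 0 < r /\ subset (ball x r) W.

Definition boundary (d : nat) (W : Rvec d -> Prop) : Rvec d -> Prop :=
  fun x => closure W x /\ ~ interior W x.

Definition inner_regular (d : nat) (W : Rvec d -> Prop) :=
  exists r, 0 < r /\ forall x, boundary W x ->
    exists y, dist x y = r /\ subset (ball y r) W.

Definition ind (P : Prop) : R :=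
  if excluded_middle_informative P then 1 else 0.

(* z in hW  iff  z / h in W *)
Definition in_scaled (d : nat) (h : R) (W : Rvec d -> Prop) (z : Zvec d) : Prop :=
  W (fun i => IZR (z i) / h).

Definition shift (d : nat) (z : Zvec d) (i : 'I_d) (s : Z) : Zvec d :=
  fun j => if j == i then (z j + s)%Z else z j.

Definition lap (d : nat) (u : Zvec d -> R) (z : Zvec d) : R :=
  sumI (fun i => u (shift z i 1%Z) + u (shift z i (-1)%Z) - 2 * u z).

Fixpoint viter (d : nat) (h : R) (W : Rvec d -> Prop) (k : nat) : Zvec d -> R :=
  match k with
  | O => fun z => h * ind (in_scaled h W z)
  | S k' => fun z =>
      let v := viter h W k' in
      v z + / (2 * INR d) * Rmax 0 (lap v z - ind (v z = 0))
  end.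

Definition admissible (d : nat) (h : R) (W : Rvec d -> Prop) (u : Zvec d -> R) :=
  (forall z, h * ind (in_scaled h W z) <= u z) /\
  (forall z, lap u z <= ind (u z = 0)).

(* Main.v *)
Require Import Defs.
From mathcomp Require Import all_boot.
From Stdlib Require Import Reals Lra Lia ClassicalEpsilon.
Open Scope R_scope.

Definition F {A : Type} (l : list A) (f : A -> R) : R :=
  List.fold_right (fun i acc => f i + acc) 0 l.

Lemma F_le {A} (l : list A) f g : (forall i, f i <= g i) -> F l f <= F l g.
Proof. move=> H; elim: l => [|a l IH] /=; [lra|]. have := H a; lra. Qed.

Lemma F_minus {A} (l : list A) f g : F l (fun i => f i - g i) = F l f - F l g.
Proof. elim: l => [|a l IH] /=; [ring|]. rewrite IH; ring. Qed.

Lemma F_const {A} (l : list A) c : F l (fun _ => c) = INR (length l) * c.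
Proof. elim: l => [|a l IH]; first (simpl; ring). rewrite [F _ _]/= IH. change (length (a :: l)) with (S (length l)). rewrite S_INR; ring. Qed.

Lemma cv_const c : Un_cv (fun _ => c) c.
Proof. move=> e He; exists 0%nat => n _; rewrite /Rdist Rminus_diag Rabs_R0; lra. Qed.

Lemma F_cv {A} (l : list A) (f : nat -> A -> R) g :
  (forall i, Un_cv (fun k => f k i) (g i)) -> Un_cv (fun k => F l (f k)) (F l g).
Proof.
move=> H; elim: l => [|a l IH] /=; first exact: cv_const.
exact: CV_plus.
Qed.

Lemma length_size {T} (s : seq T) : List.length s = size s.
Proof. by elim: s => //= a s ->. Qed.

Lemma len_enum d : List.length (enum 'I_d) = d.
Proof. by rewrite length_size size_enum_ord. Qed.

Lemma ind_T {P : Prop} : P -> Defs.ind P = 1.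
Proof. unfold Defs.ind; destruct (excluded_middle_informative P); simpl; tauto. Qed.
Lemma ind_F {P : Prop} : ~ P -> Defs.ind P = 0.
Proof. unfold Defs.ind; destruct (excluded_middle_informative P); simpl; tauto. Qed.
Lemma ind_bnd (P : Prop) : 0 <= Defs.ind P <= 1.
Proof. unfold Defs.ind; destruct (excluded_middle_informative P); simpl; lra. Qed.

Lemma lap_diff d (v u : Zvec d -> R) z :
  (forall y, v y <= u y) -> lap v z - lap u z <= 2 * INR d * (u z - v z).
Proof.
move=> H. rewrite /lap.
change (F (enum 'I_d) (fun i => v (shift z i 1%Z) + v (shift z i (-1)%Z) - 2 * v z)
  - F (enum 'I_d) (fun i => u (shift z i 1%Z) + u (shift z i (-1)%Z) - 2 * u z)
  <= 2 * INR d * (u z - v z)).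
rewrite -F_minus.
have -> : 2 * INR d * (u z - v z) = F (enum 'I_d) (fun _ => 2 * (u z - v z)).
  rewrite F_const len_enum; ring.
apply: F_le => i.
have := H (shift z i 1%Z); have := H (shift z i (-1)%Z); lra.
Qed.

Lemma lap_const d (c : R) (z : Zvec d) : lap (fun _ => c) z <= 0.
Proof.
rewrite /lap.
change (F (enum 'I_d) (fun i => c + c - 2 * c) <= 0).
rewrite F_const; lra.
Qed.

Lemma cv_le_ev (x y : nat -> R) lx ly N :
  Un_cv x lx -> Un_cv y ly -> (forall n, (N <= n)%coq_nat -> x n <= y n) -> lx <= ly.
Proof.
move=> Hx Hy H.
apply: Rnot_lt_le => Hlt.
have He : (lx - ly) / 2 > 0 by lra.
case: (Hx _ He) => N1 H1; case: (Hy _ He) => N2 H2.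
set n := Nat.max N (Nat.max N1 N2).
have a : (n >= N1)%coq_nat by rewrite /n; lia.
have b : (n >= N2)%coq_nat by rewrite /n; lia.
have c : (N <= n)%coq_nat by rewrite /n; lia.
have := H1 n a; have := H2 n b; have := H n c.
rewrite /Rdist => h0 h2 h1.
move: h1 h2 => /Rabs_def2 [? ?] /Rabs_def2 [? ?]. lra.
Qed.

Lemma viter_S d h W k z :
  @viter d h W (S k) z = viter h W k z + / (2 * INR d) *
     Rmax 0 (lap (viter h W k) z - Defs.ind (viter h W k z = 0)).
Proof. reflexivity. Qed.

Theorem mainTheorem15 (d : nat) (W : Rvec d -> Prop) (h : R) :
  (0 < d)%nat ->
  is_open W -> is_bounded W -> is_convex W -> inner_regular W ->
  W (fun _ => 0) -> 1 < h ->
  exists uh : Zvec d -> R,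
    admissible h W uh /\
    (forall u, admissible h W u -> forall z, uh z <= u z) /\
    (forall z, Un_cv (fun k => viter h W k z) (uh z)).
Proof.
move=> Hd0 _ _ _ _ _ Hh.
have Hd : 0 < INR d by apply: lt_0_INR; apply/ltP.
have HD : 0 < 2 * INR d by lra.
have HiD : 0 < / (2 * INR d) by apply: Rinv_0_lt_compat.
set v := viter h W.
have step : forall k z, v k z <= v (S k) z.
  move=> k z; rewrite /v viter_S.
  have := Rmax_l 0 (lap (viter h W k) z - Defs.ind (viter h W k z = 0)).
  move=> HM; have := Rmult_le_pos _ _ (Rlt_le _ _ HiD) HM; lra.
have nonneg : forall k z, 0 <= v k z.
  elim=> [|k IH] z.
    rewrite /v /=; have := ind_bnd (in_scaled h W z); nra.
  have := step k z; have := IH z; lra.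
have below : forall u, admissible h W u -> forall k z, v k z <= u z.
  move=> u [Hu0 Hu1]; elim=> [|k IH] z; first exact: Hu0.
  rewrite /v viter_S -/v.
  have Hind : Defs.ind (u z = 0) <= Defs.ind (v k z = 0).
    case: (Req_dec (u z) 0) => Huz.
      rewrite (@ind_T (v k z = 0)); last (have := nonneg k z; have := IH z; lra).
      have := ind_bnd (u z = 0); lra.
    rewrite (ind_F Huz); have := ind_bnd (v k z = 0); lra.
  have Hl := @lap_diff d (v k) u z IH.
  have Hu := Hu1 z.
  case: (Rle_dec (lap (v k) z - Defs.ind (v k z = 0)) 0) => Hc.
    rewrite Rmax_left //; rewrite Rmult_0_r Rplus_0_r; exact: IH.
  rewrite Rmax_right; last lra.
  have : lap (v k) z - Defs.ind (v k z = 0) <= 2 * INR d * (u z - v k z) by lra.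
  move=> Hb.
  have : / (2 * INR d) * (lap (v k) z - Defs.ind (v k z = 0)) <= u z - v k z.
    apply: (Rmult_le_reg_l (2 * INR d)) => //.
    rewrite -Rmult_assoc Rinv_r; lra.
  lra.
have adm_c : admissible h W (fun _ => h).
  split=> z; first by have := ind_bnd (in_scaled h W z); nra.
  have := @lap_const d h z; have := ind_bnd (h = 0); lra.
have gr : forall z, Un_growing (fun k => v k z) by move=> z k; apply: step.
have ub : forall z, has_ub (fun k => v k z).
  move=> z; exists h => x [i ->]; exact: (below _ adm_c i z).
pose uh z := proj1_sig (growing_cv _ (gr z) (ub z)).
have cv : forall z, Un_cv (fun k => v k z) (uh z).
  move=> z; rewrite /uh; case: growing_cv => //.
have le_uh : forall k z, v k z <= uh z by move=> k z; exact: (@growing_ineq _ _ (gr z) (cv z) k).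
exists uh; split; last split.
- split=> z; first exact: (le_uh 0%nat z).
  have cvS : Un_cv (fun k => v (S k) z) (uh z).
    move=> e He; case: (cv z e He) => N HN; exists N => n Hn; apply: HN; lia.
  have ca : Un_cv (fun k => 2 * INR d * (v (S k) z - v k z)) (2 * INR d * (uh z - uh z)).
    apply: CV_mult; [exact: cv_const | exact: CV_minus].
  rewrite Rminus_diag Rmult_0_r in ca.
  have cl : Un_cv (fun k => lap (v k) z) (lap uh z).
    rewrite /lap.
    change (Un_cv (fun k => F (enum 'I_d) (fun i => v k (shift z i 1%Z) + v k (shift z i (-1)%Z) - 2 * v k z))
       (F (enum 'I_d) (fun i => uh (shift z i 1%Z) + uh (shift z i (-1)%Z) - 2 * uh z))).
    apply: (@F_cv _ (enum 'I_d) (fun k i => v k (shift z i 1%Z) + v k (shift z i (-1)%Z) - 2 * v k z) _) => i.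
    apply: CV_minus; first exact: CV_plus.
    apply: CV_mult; [exact: cv_const | exact: cv].
  have key : forall k, lap (v k) z - Defs.ind (v k z = 0) <= 2 * INR d * (v (S k) z - v k z).
    move=> k; rewrite /v viter_S -/v.
    have := Rmax_r 0 (lap (v k) z - Defs.ind (v k z = 0)).
    set M := Rmax _ _ => HM.
    have -> : v k z + / (2 * INR d) * M - v k z = / (2 * INR d) * M by ring.
    rewrite -Rmult_assoc Rinv_r; lra.
  case: (Req_dec (uh z) 0) => Hz.
    rewrite (ind_T Hz).
    have ca1 := CV_plus _ _ _ _ ca (cv_const 1); rewrite Rplus_0_l in ca1.
    apply: (@cv_le_ev _ _ _ _ 0%nat cl ca1) => n _.
    have Hv : v n z = 0 by have := nonneg n z; have := le_uh n z; lra.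
    have := key n; rewrite (ind_T Hv); lra.
  rewrite (ind_F Hz).
  have Hpos : uh z > 0 by have := nonneg 0%nat z; have := le_uh 0%nat z; lra.
  case: (cv z (uh z) Hpos) => N HN.
  apply: (@cv_le_ev _ _ _ _ N cl ca) => n Hn.
  have Hv : v n z <> 0.
    move=> E; have := HN n Hn; rewrite /Rdist E => /Rabs_def2 [? ?]; lra.
  have := key n; rewrite (ind_F Hv); lra.
- move=> u Hu z.
  apply: (@cv_le_ev _ _ _ _ 0%nat (cv z) (cv_const (u z))) => n _.
  exact: below.
- exact: cv.
Qed.
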